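(* Let $M_1$ and $M_2$ be matroids on disjoint ground sets $E_1$ and $E_2$, of ranks $r_1$ and $r_2$. Let $\mathcal{A}\subseteq\mathcal{B}(M_1\oplus M_2)$ be nonempty. Then $\mathcal{A}$ is the collection of bases of a matroid on $E_1\cup E_2$ if and only if $\mathcal{A}=\{X\cup Y : X\in\mathcal{A}_1,\ Y\in\mathcal{A}_2\}$ for some $\mathcal{A}_1\subseteq\mathcal{B}(M_1)$ and $\mathcal{A}_2\subseteq\mathcal{B}(M_2)$ which are collections of bases of matroids (on $E_1$ and $E_2$ respectively).
   Context: The direct sum $M_1\oplus M_2$ of matroids on disjoint ground sets $E_1,E_2$ is the matroid on $E_1\cup E_2$ with bases $\{B_1\cup B_2: B_1\in\mathcal{B}(M_1),\ B_2\in\mathcal{B}(M_2)\}$; it has rank $r_1+r_2$. *)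

(* Defs.v *)
From mathcomp Require Import all_boot.
Set Implicit Arguments. Unset Strict Implicit. Unset Printing Implicit Defensive.

Definition is_matroid_bases (T : finType) (E : {set T}) (B : {set {set T}}) : Prop :=
  [/\ B != set0,
      (forall X, X \in B -> X \subset E) &
      (forall B1 B2, B1 \in B -> B2 \in B ->
         forall x, x \in B1 :\: B2 ->
           exists2 y, y \in B2 :\: B1 & (B1 :\ x) :|: [set y] \in B)].

(* The family {X ∪ Y : X ∈ B1, Y ∈ B2}; for bases of M1, M2 on disjoint
   ground sets this is B(M1 ⊕ M2). *)
Definition sum_bases (T : finType) (B1 B2 : {set {set T}}) : {set {set T}} :=
  [set X :|: Y | X in B1, Y in B2].

(* Main.v *)
Require Import Defs.
From mathcomp Require Import all_boot.
Set Implicit Arguments. Unset Strict Implicit. Unset Printing Implicit Defensive.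

Lemma anti (T : finType) (E : {set T}) (B : {set {set T}}) X X' :
  is_matroid_bases E B -> X \in B -> X' \in B -> X' \subset X -> X' = X.
Proof.
case=> _ _ ex hX hX' sub; apply/eqP; rewrite eqEsubset sub /=.
apply/subsetP=> x xX; apply/negPn/negP=> nx.
have [y] := ex X X' hX hX' x ltac:(by rewrite inE nx xX).
rewrite inE => /andP[nyX yX'] _.
by rewrite (subsetP sub _ yX') in nyX.
Qed.

Section S.
Variables (T : finType) (E1 E2 : {set T}) (B1 B2 A : {set {set T}}).
Hypotheses (dis : [disjoint E1 & E2]) (m1 : is_matroid_bases E1 B1)
  (m2 : is_matroid_bases E2 B2)
  (HP : forall B, B \in A -> [/\ B :&: E1 \in B1, B :&: E2 \in B2 & B \subset E1 :|: E2])
  (mA : is_matroid_bases (E1 :|: E2) A).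

Lemma part : is_matroid_bases E1 [set B :&: E1 | B in A].
Proof.
case: mA => An _ exA; split.
- case/set0Pn: An => B hB; apply/set0Pn; exists (B :&: E1); exact: imset_f.
- by move=> X /imsetP[B _ ->]; exact: subsetIr.
move=> X X' /imsetP[B hB ->] /imsetP[B' hB' ->] x.
rewrite !inE => /andP[]; rewrite negb_and => nxB' /andP[xB xE1].
rewrite xE1 orbF in nxB'.
have [y] := exA B B' hB hB' x ltac:(by rewrite inE xB nxB').
rewrite inE => /andP[ynB yB'] hN.
have [h1 h2 h3] := HP hN.
have yE : y \in E1.
  have [_ _ sB'] := HP hB'.
  have := subsetP sB' _ yB'; rewrite inE => /orP[//|yE2].
  have ynE1 : y \in E1 = false by rewrite (disjointFl dis yE2).
  have heq : (B :\ x :|: [set y]) :&: E1 = (B :&: E1) :\ x.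
    apply/setP=> z; rewrite !inE; case: (z =P y) => [->|_].
      by rewrite ynE1 !andbF.
    by rewrite orbF andbA.
  have [hB1 _ _] := HP hB.
  have := anti m1 hB1 h1; rewrite heq => /(_ (subsetDl _ _)) /setP /(_ x).
  by rewrite !inE eqxx xB xE1.
exists y; first by rewrite !inE (negbTE ynB) yB' yE.
apply/imsetP; exists (B :\ x :|: [set y]) => //.
apply/setP=> z; rewrite !inE; case: (z =P y) => [->|_].
  by rewrite yE !orbT.
by rewrite !orbF andbA.
Qed.

Lemma mix B B' : B \in A -> B' \in A -> (B :&: E1) :|: (B' :&: E2) \in A.
Proof.
move=> hB hB'.
case: mA => _ _ exA.
have [_ hB'2 sB'] := HP hB'.
have step : forall D, D \in A -> D :&: E1 = B :&: E1 ->
   (B :&: E1) :|: (B' :&: E2) \in A \/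
   exists2 D', D' \in A /\ D' :&: E1 = B :&: E1 &
     #|(D' :&: E2) :\: B'| < #|(D :&: E2) :\: B'|.
  move=> D hD hD1.
  have [hD1' hD2 sD] := HP hD.
  case: (eqVneq ((D :&: E2) :\: B') set0) => [e|/set0Pn[x]].
    left.
    have sub : D :&: E2 \subset B' :&: E2.
      apply/subsetP=> z hz.
      have : z \notin (D :&: E2) :\: B' by rewrite e inE.
      move: hz; rewrite !inE => /andP[zD zE2]; rewrite zD zE2 !andbT => /negPn ->.
      by [].
    have := anti m2 hB'2 hD2 sub => heq2.
    rewrite -hD1 -heq2 -setIUr; by move/setIidPl: sD => ->.
  rewrite !inE => /andP[nxB' /andP[xD xE2]].
  right.
  have [y] := exA D B' hD hB' x ltac:(by rewrite inE xD nxB').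
  rewrite inE => /andP[ynD yB'] hN.
  have [hN1 hN2 _] := HP hN.
  have xnE1 : x \in E1 = false by rewrite (disjointFl dis xE2).
  have yE2 : y \in E2.
    have := subsetP sB' _ yB'; rewrite inE => /orP[yE1|//].
    have yn2 : y \in E2 = false by rewrite (disjointFr dis yE1).
    have heq : (D :\ x :|: [set y]) :&: E2 = (D :&: E2) :\ x.
      apply/setP=> z; rewrite !inE; case: (z =P y) => [->|_].
        by rewrite yn2 !andbF.
      by rewrite orbF andbA.
    have := anti m2 hD2 hN2; rewrite heq => /(_ (subsetDl _ _)) /setP /(_ x).
    by rewrite !inE eqxx xD xE2.
  have ynE1 : y \in E1 = false by rewrite (disjointFl dis yE2).
  exists (D :\ x :|: [set y]); first split => //.
    rewrite -hD1; apply/setP=> z; rewrite !inE; case: (z =P y) => [->|_].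
      by rewrite ynE1 (negbTE ynD) !andbF.
    case: (z =P x) => [->|_]; first by rewrite xnE1 !andbF.
    by rewrite orbF.
  apply: (@leq_trans #|((D :&: E2) :\: B') :\ x|.+1).
    rewrite ltnS; apply: subset_leq_card; apply/subsetP=> z.
    rewrite !inE; case: (z =P y) => [->|_]; first by rewrite yB'.
    by rewrite orbF => /andP[-> /andP[/andP[-> ->] ->]].
  by rewrite (cardsD1 x ((D :&: E2) :\: B')) !inE nxB' xD xE2.
suff: forall n D, #|(D :&: E2) :\: B'| <= n -> D \in A -> D :&: E1 = B :&: E1 ->
   (B :&: E1) :|: (B' :&: E2) \in A by move/(_ _ B (leqnn _)); apply.
elim=> [|n IH] D hn hD hD1; case: (step D hD hD1) => [//|[D' [hD' hD'1] lt]].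
  by have := leq_trans lt hn.
by apply: (IH D') => //; rewrite -ltnS; exact: leq_trans lt hn.
Qed.

End S.

Lemma sumC (T : finType) (A1 A2 : {set {set T}}) : sum_bases A1 A2 = sum_bases A2 A1.
Proof.
apply/setP=> Z; apply/imset2P/imset2P=> [][X Y hX hY ->]; exists Y X => //; exact: setUC.
Qed.

Lemma sum_exch (T : finType) (E1 E2 : {set T}) (A1 A2 : {set {set T}}) :
  [disjoint E1 & E2] -> is_matroid_bases E1 A1 -> is_matroid_bases E2 A2 ->
  forall X Y X' Y', X \in A1 -> Y \in A2 -> X' \in A1 -> Y' \in A2 ->
  forall x, x \in (X :|: Y) :\: (X' :|: Y') -> x \in X ->
  exists2 y, y \in (X' :|: Y') :\: (X :|: Y) &
     ((X :|: Y) :\ x) :|: [set y] \in sum_bases A1 A2.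
Proof.
move=> dis [_ s1 ex1] [_ s2 _] X Y X' Y' hX hY hX' hY' x.
rewrite !inE negb_or => /andP[/andP[nxX' nxY'] _] xX.
have [y] := ex1 X X' hX hX' x ltac:(by rewrite inE xX nxX').
rewrite inE => /andP[ynX yX'] hN.
have yE1 := subsetP (s1 _ hX') _ yX'.
have xE1 := subsetP (s1 _ hX) _ xX.
have ynY : y \in Y = false.
  by apply/negP=> /(subsetP (s2 _ hY)); rewrite (disjointFr dis yE1).
have xnY : x \in Y = false.
  by apply/negP=> /(subsetP (s2 _ hY)); rewrite (disjointFr dis xE1).
exists y; first by rewrite !inE yX' (negbTE ynX) ynY.
apply/imset2P; exists (X :\ x :|: [set y]) Y => //.
apply/setP=> z; rewrite !inE; case: (z =P y) => [->|_]; first by rewrite !orbT.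
case: (z =P x) => [->|_]; first by rewrite xnY.
by rewrite !orbF.
Qed.

Lemma sum_matroid (T : finType) (E1 E2 : {set T}) (A1 A2 : {set {set T}}) :
  [disjoint E1 & E2] -> is_matroid_bases E1 A1 -> is_matroid_bases E2 A2 ->
  is_matroid_bases (E1 :|: E2) (sum_bases A1 A2).
Proof.
move=> dis m1 m2; have m1' := m1; have m2' := m2.
case: m1' => n1 s1 _; case: m2' => n2 s2 _; split.
- case/set0Pn: n1 => X hX; case/set0Pn: n2 => Y hY.
  by apply/set0Pn; exists (X :|: Y); apply/imset2P; exists X Y.
- move=> Z /imset2P[X Y hX hY ->]; exact: setUSS (s1 _ hX) (s2 _ hY).
move=> Z Z' /imset2P[X Y hX hY ->] /imset2P[X' Y' hX' hY' ->] x hx.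
have : x \in X :|: Y by move: hx; rewrite inE => /andP[].
rewrite inE => /orP[xX|xY]; first exact: (sum_exch dis m1 m2 hX hY hX' hY' hx xX).
have dis' : [disjoint E2 & E1] by rewrite disjoint_sym.
rewrite [X :|: Y]setUC [X' :|: Y']setUC sumC in hx *.
exact: sum_exch dis' m2 m1 Y X Y' X' hY hX hY' hX' x hx xY.
Qed.

Theorem lemma2 (T : finType) (E1 E2 : {set T}) (B1 B2 A : {set {set T}}) :
  [disjoint E1 & E2] ->
  is_matroid_bases E1 B1 ->
  is_matroid_bases E2 B2 ->
  A \subset sum_bases B1 B2 ->
  A != set0 ->
  (is_matroid_bases (E1 :|: E2) A <->
   exists A1 A2 : {set {set T}},
     [/\ A1 \subset B1, A2 \subset B2,
         is_matroid_bases E1 A1, is_matroid_bases E2 A2 &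
         A = sum_bases A1 A2]).
Proof.
move=> dis m1 m2 sA An; split; last first.
  by case=> A1 [A2 [_ _ h1 h2 ->]]; exact: sum_matroid.
move=> mA.
have [_ s1 _] := m1; have [_ s2 _] := m2.
have dec : forall B, B \in A -> exists X Y, [/\ X \in B1, Y \in B2,
    B = X :|: Y, B :&: E1 = X & B :&: E2 = Y].
  move=> B hB; have := subsetP sA _ hB => /imset2P[X Y hX hY ->].
  have sX := s1 _ hX; have sY := s2 _ hY.
  exists X, Y; split => //; apply/setP=> z; rewrite !inE.
    case hz: (z \in X); first by rewrite (subsetP sX).
    case hzY: (z \in Y) => //=.
    by rewrite (disjointFr (A := E2) _ (subsetP sY _ hzY)) // disjoint_sym.
  case hz: (z \in Y); first by rewrite (subsetP sY) ?orbT.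
  case hzX: (z \in X) => //=.
  by rewrite (disjointFr dis (subsetP sX _ hzX)).
have HP : forall B, B \in A ->
    [/\ B :&: E1 \in B1, B :&: E2 \in B2 & B \subset E1 :|: E2].
  move=> B hB; have [X [Y [hX hY -> -> ->]]] := dec B hB.
  by split => //; exact: setUSS (s1 _ hX) (s2 _ hY).
have HP' : forall B, B \in A ->
    [/\ B :&: E2 \in B2, B :&: E1 \in B1 & B \subset E2 :|: E1].
  by move=> B /HP[? ? ?]; rewrite setUC.
have mA' : is_matroid_bases (E2 :|: E1) A by rewrite setUC.
have dis' : [disjoint E2 & E1] by rewrite disjoint_sym.
exists [set B :&: E1 | B in A], [set B :&: E2 | B in A]; split.
- by apply/subsetP=> X /imsetP[B /HP[]] ? _ _ ->.
- by apply/subsetP=> X /imsetP[B /HP[]] _ ? _ ->.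
- exact: (part dis m1 HP mA).
- exact: (part dis' m2 HP' mA').
apply/setP=> Z; apply/idP/imset2P.
  move=> hZ; exists (Z :&: E1) (Z :&: E2); try exact: imset_f.
  by case/HP: hZ => _ _ /setIidPl; rewrite setIUr.
case=> _ _ /imsetP[B hB ->] /imsetP[B' hB' ->] ->.
exact: (mix dis m2 HP mA hB hB').
Qed.
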